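(* Let $U$ be a unicyclic graph with an edge $\ell u\in E(U)$ such that $\deg(\ell)=1$ and $u\in V(\operatorname{Cycles}(U))$. (i) If $v\in V(\operatorname{Cycles}(U))$, $v\neq u$ and $\deg(v)>2$, then there exists a u-switch $\tau$ over $U$ such that $\ell v\in E(\tau(U))$. (ii) If $v\notin V(\operatorname{Cycles}(U))$ and $\deg(v)\ge2$, then there exists a u-switch $\tau$ over $U$ such that $\ell v\in E(\tau(U))$.
   Context: Graphs are finite, simple, undirected, labeled. A unicyclic graph is a connected graph with exactly one cycle. For vertices $a,b,c,d$, $A=\binom{a\ b}{c\ d}$ is interchangeable in $G$ if $ab,cd\in E(G)$, $\{a,b\}\cap\{c,d\}=\varnothing$, $ac,bd\notin E(G)$; the 2-switch $\tau_A$ sends $G$ to $G-ab-cd+ac+bd$ if $A$ is interchangeable and to $G$ otherwise (trivial). A nontrivial 2-switch $\tau$ over a unicyclic $U$ is a u-switch if $\tau(U)$ is unicyclic. $\operatorname{Cycles}(G)$ is the subgraph induced by vertices lying on some cycle of $G$. *)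

(* Defs.v *)
From mathcomp Require Import all_boot.
Set Implicit Arguments. Unset Strict Implicit. Unset Printing Implicit Defensive.

Section Graphs.
Variable T : finType.

Definition simple_graph (g : rel T) : Prop := symmetric g /\ irreflexive g.

Definition connected_graph (g : rel T) : Prop := forall x y, connect g x y.

Definition is_cycle (g : rel T) (c : seq T) : bool :=
  [&& 3 <= size c, uniq c & cycle g c].

(* the edge set of the cycle c (edges as 2-element vertex sets); two cycle
   sequences denote the same cycle (subgraph) iff they have the same edges *)
Definition cycle_edges (c : seq T) : {set {set T}} :=
  [set [set x; next c x] | x in c].

Definition has_unique_cycle (g : rel T) : Prop :=
  exists c, is_cycle g c /\
    forall c', is_cycle g c' -> cycle_edges c' = cycle_edges c.

Definition unicyclic (g : rel T) : Prop :=
  [/\ simple_graph g, connected_graph g & has_unique_cycle g].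

Definition on_cycle (g : rel T) (v : T) : Prop :=
  exists c, is_cycle g c /\ v \in c.

Definition deg (g : rel T) (v : T) : nat := #|[set w | g v w]|.

Definition same_edge (x y a b : T) : bool :=
  ((x == a) && (y == b)) || ((x == b) && (y == a)).

Definition interchangeable (g : rel T) (a b c d : T) : bool :=
  [&& g a b, g c d, [disjoint [set a; b] & [set c; d]], ~~ g a c & ~~ g b d].

Definition two_switch (g : rel T) (a b c d : T) : rel T :=
  if interchangeable g a b c d then
    fun x y => (g x y && ~~ same_edge x y a b && ~~ same_edge x y c d)
               || same_edge x y a c || same_edge x y b d
  else g.

Definition u_switch (g : rel T) (a b c d : T) : Prop :=
  interchangeable g a b c d /\ unicyclic (two_switch g a b c d).

End Graphs.

(* Main.v *)
Require Import Defs.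
From mathcomp Require Import all_boot.
Set Implicit Arguments. Unset Strict Implicit. Unset Printing Implicit Defensive.

Section Gen.
Variable T : finType.
Implicit Types (e : rel T) (c p q : seq T).

Lemma se_sym (x y a b : T) : same_edge x y a b = same_edge y x a b.
Proof. by rewrite /same_edge; case: (x == a); case: (y == b); case: (x == b); case: (y == a). Qed.

Lemma cyc3 e c x : is_cycle e c -> x \in c ->
  exists a b q, [/\ next c x = a, e x a, e b x, path e a (rcons q b) & uniq (x :: a :: rcons q b)].
Proof.
case/and3P=> sz uc cc /rot_to[i s Ds].
have hs : 3 <= size (x :: s) by rewrite -Ds size_rot.
have cs : cycle e (x :: s) by rewrite -Ds rot_cycle.
have us : uniq (x :: s) by rewrite -Ds rot_uniq.
have nx : next c x = next (x :: s) x by rewrite -Ds next_rot.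
move: hs cs us nx; clear Ds.
case: s => [|a s'] //= hs.
case/lastP: s' hs => [|q b] //= hs.
move=> /andP[exa]; rewrite rcons_path last_rcons => /andP[pa ebx] us nx.
exists a, b, q; split => //; by rewrite nx eqxx.
Qed.

Lemma leaf_off e c x t : symmetric e -> is_cycle e c -> x \in c ->
  (forall y, e x y -> y = t) -> False.
Proof.
move=> se cc xc H; have [a [b [q [_ exa ebx _ uq]]]] := cyc3 cc xc.
have ha := H _ exa; rewrite se in ebx; have hb := H _ ebx.
by move: uq; rewrite ha hb /= mem_rcons inE eqxx /= andbF.
Qed.

Lemma path_last_P e (P : pred T) x a p : path e a p -> x \notin p -> P a ->
  (forall s t, P s -> e s t -> t != x -> P t) -> P (last a p).
Proof.
elim: p a => //= y p IH a /andP[eay pp]; rewrite inE negb_or => /andP[xy xp] Pa H.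
by apply: IH => //; apply: H Pa eay _; rewrite eq_sym.
Qed.

Lemma no_cross e c (P : pred T) x : is_cycle e c -> x \in c -> P (next c x) ->
  (forall s t, P s -> e s t -> t != x -> P t) ->
  (forall s, P s -> e s x -> s = next c x) -> False.
Proof.
move=> cc xc Pa H1 H2; have [a [b [q [na exa ebx pq uq]]]] := cyc3 cc xc.
rewrite na in Pa H2.
have Pb : P b.
  have := path_last_P pq _ Pa H1; rewrite last_rcons; apply.
  by move: uq; rewrite /= inE negb_or => /andP[/andP[]].
have ba := H2 _ Pb ebx.
by move: uq; rewrite ba /= mem_rcons inE eqxx /= andbF.
Qed.

Definition rmv e v := [rel a b | [&& e a b, a != v & b != v]].

Lemma path_rmv_all e v a p : path (rmv e v) a p -> all (fun t => t != v) p.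
Proof. by elim: p a => //= y p IH a /andP[/and3P[_ _ ->] /IH]. Qed.

Lemma next_last_at (y0 y : T) p : uniq (y :: p) -> next_at (last y p) y0 y p = y0.
Proof.
elim: p y => [|y' p IH] y /=.
  by move=> _; case: eqP.
move=> /and3P[]; rewrite in_cons negb_or => /andP[yy' yp] y'p up.
have -> : (last y' p == y) = false.
  apply/negbTE/eqP => e0.
  have := mem_last y' p; rewrite e0 in_cons => /orP[/eqP e1|e1].
    by move: yy'; rewrite e1 eqxx.
  by move: yp; rewrite e1.
by apply: IH; rewrite /= y'p up.
Qed.

Lemma mk_cycle e v w x : irreflexive e -> connect (rmv e v) w x -> x != w ->
  e x v -> e v w ->
  exists c', [/\ is_cycle e c', v \in c', w \in c', x \in c' & next c' x = v].
Proof.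
move=> ir /connectP[p pp ->] xw exv evw.
case: (shortenP pp) xw exv => p' pp' up' _ xw exv.
have wv : w != v by apply: contraTneq evw => ->; rewrite ir.
have av := path_rmv_all pp'.
have vp : v \notin w :: p'.
  rewrite inE negb_or eq_sym wv /=; apply/negP => /(allP av); by rewrite eqxx.
exists [:: v, w & p']; split.
- rewrite /is_cycle; apply/and3P; split.
  + by case: p' xw {pp' up' av vp exv} => //=; rewrite eqxx.
  + by rewrite cons_uniq vp up'.
  + rewrite /= evw rcons_path exv andbT.
    by apply: sub_path pp' => a b /and3P[].
- by rewrite mem_head.
- by rewrite inE mem_head orbT.
- by rewrite in_cons mem_last orbT.
- rewrite /next /=.
  have -> : (last w p' == v) = false by apply/negbTE; apply: contra vp => /eqP <-; rewrite mem_last.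
  exact: next_last_at.
Qed.


Lemma rmv_sym e v : symmetric e -> symmetric (rmv e v).
Proof. by move=> se a b /=; rewrite se; case: (a != v); case: (b != v); rewrite ?andbF. Qed.

Lemma path_rmv e v a p : path e a p -> all (fun t => t != v) (a :: p) -> path (rmv e v) a p.
Proof.
elim: p a => //= y p IH a /andP[eay pp] /and3P[av yv ap].
by rewrite eay av yv /=; apply: IH => //=; rewrite yv.
Qed.

Lemma cyc_conn e c v y y' : symmetric e -> is_cycle e c -> v \in c -> y \in c -> y' \in c ->
  y != v -> y' != v -> connect (rmv e v) y y'.
Proof.
move=> se /and3P[_ uc cc] /rot_to[i s Ds] yc y'c yv y'v.
have cs : cycle e (v :: s) by rewrite -Ds rot_cycle.
have us : uniq (v :: s) by rewrite -Ds rot_uniq.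
have ys : y \in v :: s by rewrite -Ds mem_rot.
have y's : y' \in v :: s by rewrite -Ds mem_rot.
move: cs us ys y's; case: s {Ds} => [|h s] /=.
  by move=> _ _; rewrite inE => /eqP yv'; move: yv; rewrite yv' eqxx.
rewrite rcons_path => /andP[evh /andP[ps _]] /andP[vn us].
rewrite !in_cons (negbTE yv) (negbTE y'v) /= => ys y's.
have al : all (fun t => t != v) (h :: s).
  by apply/allP => t ts; apply: contraNneq vn => <-.
have pr := path_rmv ps al.
have c1 := path_connect pr ys; have c2 := path_connect pr y's.
apply: connect_trans _ c2; by rewrite (sym_connect_sym (rmv_sym v se)).
Qed.

Lemma path_to e v x p : path e x p -> v \in p -> x != v ->
  exists z, connect (rmv e v) x z /\ e z v.
Proof.
elim: p x => //= y p IH x /andP[exy pp]; rewrite in_cons => vp xv.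
case: (eqVneq y v) => [yv|yv].
  by exists x; split; [exact: connect0 | rewrite -yv].
have vp' : v \in p by move: vp; rewrite eq_sym (negbTE yv).
have [z [cz ez]] := IH y pp vp' yv.
exists z; split => //; apply: connect_trans cz; apply: connect1; by rewrite /= exy xv yv.
Qed.

End Gen.

Section Uni.
Variables (T : finType) (U : rel T) (c : seq T).
Hypothesis (Huniq : forall c', is_cycle U c' -> cycle_edges c' = cycle_edges c).

Lemma in_c c' x : is_cycle U c' -> x \in c' -> x \in c.
Proof.
move=> cc xc; have : [set x; next c' x] \in cycle_edges c.
  by rewrite -(Huniq cc); apply/imsetP; exists x.
case/imsetP => y yc /setP /(_ x); rewrite !inE eqxx /= => /esym /orP[/eqP->|/eqP->] //.
by rewrite mem_next.
Qed.
End Uni.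
Section Core.
Variables (T : finType) (U : rel T) (l u v w z : T) (c : seq T).
Hypotheses (Usym : symmetric U) (Uirr : irreflexive U) (Ucon : connected_graph U)
  (Hc : is_cycle U c) (Huniq : forall c', is_cycle U c' -> cycle_edges c' = cycle_edges c)
  (Hlu : U l u) (Hl : forall y, U l y -> y = u) (Huc : u \in c)
  (Hvw : U v w) (Hzv : U z v) (Hz : connect (rmv U v) u z) (Hzw : z != w)
  (Hvwc : ~~ (v \in c) || ~~ (w \in c)) (Huv : u != v) (Hlv : l != v).

Let Wp x := connect (rmv U v) w x.

Let Wv : ~~ Wp v.
Proof.
apply/negP => /connectP[p pp ev].
have av := path_rmv_all pp.
have := mem_last w p; rewrite -ev in_cons => /orP[/eqP vw'|vp].
  by move: Hvw; rewrite vw' Uirr.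
by move: (allP av _ vp); rewrite eqxx.
Qed.

Let W2 x y : Wp x -> U x y -> ~~ Wp y -> y = v.
Proof.
move=> Wx Uxy nWy; case: (eqVneq y v) => // yv; case/negP: nWy.
have xv : x != v by apply: contraTneq Wx => ->; exact: Wv.
apply: connect_trans Wx (connect1 _); by rewrite /= Uxy xv yv.
Qed.

Let W3 x : Wp x -> U x v -> x = w.
Proof.
move=> Wx Uxv; case: (eqVneq x w) => // xw.
have [c' [cc vc wc _ _]] := mk_cycle Uirr Wx xw Uxv Hvw.
by move: Hvwc; rewrite (in_c Huniq cc vc) (in_c Huniq cc wc).
Qed.

Let Wu : ~~ Wp u.
Proof.
apply/negP => Wu; have Wz : Wp z by apply: connect_trans Wu Hz.
by move: Hzw; rewrite (W3 Wz Hzv) eqxx.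
Qed.

Let Wl : ~~ Wp l.
Proof. by apply/negP => Wl'; move: Huv; rewrite (W2 Wl' Hlu Wu) eqxx. Qed.

Let Ww : Wp w. Proof. exact: connect0. Qed.

Let wu : (w == u) = false.
Proof. by apply/negbTE; apply: contraNneq Wu => <-. Qed.
Let uw : (u == w) = false. Proof. by rewrite eq_sym wu. Qed.
Let wl : (w == l) = false.
Proof.
apply/negbTE/eqP => e1; have := Hl (y := v); rewrite Usym -e1 => /(_ Hvw) e2.
by move: Huv; rewrite e2 eqxx.
Qed.
Let lw : (l == w) = false. Proof. by rewrite eq_sym wl. Qed.
Let vw : (v == w) = false.
Proof. by apply/negbTE/eqP => e1; move: Hvw; rewrite e1 Uirr. Qed.
Let wv : (w == v) = false. Proof. by rewrite eq_sym vw. Qed.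
Let lu : (l == u) = false.
Proof. by apply/negbTE/eqP => e1; move: Hlu; rewrite e1 Uirr. Qed.
Let ul : (u == l) = false. Proof. by rewrite eq_sym lu. Qed.
Let uv : (u == v) = false. Proof. exact: negbTE. Qed.
Let vu : (v == u) = false. Proof. by rewrite eq_sym uv. Qed.
Let lv : (l == v) = false. Proof. exact: negbTE. Qed.
Let vl : (v == l) = false. Proof. by rewrite eq_sym lv. Qed.
Let zv : (z == v) = false.
Proof. by apply/negbTE/eqP => e1; move: Hzv; rewrite e1 Uirr. Qed.
Let zw : (z == w) = false. Proof. exact: negbTE. Qed.
Let nUuw : U u w = false.
Proof. apply/negbTE/negP => h; rewrite Usym in h; by move: (W2 Ww h Wu) uv => ->; rewrite eqxx. Qed.
Let nUlv : U l v = false.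
Proof. by apply/negbTE/negP => /Hl e1; move: vu; rewrite e1 eqxx. Qed.

Lemma inter : interchangeable U l u v w.
Proof.
rewrite /interchangeable Hlu Hvw nUlv nUuw /= andbT.
rewrite disjoint_subset; apply/subsetP => x; rewrite !inE => /orP[]/eqP->;
  by rewrite ?lv ?lw ?uv ?uw.
Qed.

Definition g := two_switch U l u v w.

Lemma gE x y : g x y = (U x y && ~~ same_edge x y l u && ~~ same_edge x y v w)
   || same_edge x y l v || same_edge x y u w.
Proof. by rewrite /g /two_switch inter. Qed.

Variant gspec x y : Prop :=
 | GS1 of U x y & ~~ same_edge x y l u & ~~ same_edge x y v w
 | GS2 of x = l & y = v
 | GS3 of x = v & y = l
 | GS4 of x = u & y = w
 | GS5 of x = w & y = u.

Lemma gP x y : g x y -> gspec x y.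
Proof.
rewrite gE => /orP[/orP[/andP[/andP[a b] d]|]|]; first by constructor 1.
- by rewrite /same_edge => /orP[]/andP[/eqP-> /eqP->]; [constructor 2|constructor 3].
- by rewrite /same_edge => /orP[]/andP[/eqP-> /eqP->]; [constructor 4|constructor 5].
Qed.


Lemma g_sym : symmetric g.
Proof. by move=> x y; rewrite !gE Usym (se_sym x) (se_sym x y v w) (se_sym x y l v) (se_sym x y u w). Qed.

Lemma g_irr : irreflexive g.
Proof.
move=> x; have h : forall a b, a != b -> same_edge x x a b = false.
  move=> a b ab; rewrite /same_edge; apply/negbTE; apply/negP => /orP[]/andP[/eqP e1 /eqP e2];
  by move: ab; rewrite -e1 -e2 eqxx.
by rewrite gE Uirr !h // ?uw ?vw ?lu.
Qed.

Let gl y : g l y -> y = v.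
Proof.
case/gP => [Uly n1 _|//|[e1] _|[e1] _|[e1] _].
- by move: n1; rewrite (Hl Uly) /same_edge !eqxx.
- by move: lv; rewrite e1 eqxx.
- by move: lu; rewrite e1 eqxx.
- by move: lw; rewrite e1 eqxx.
Qed.

Let lc : l \notin c.
Proof. by apply/negP => lc0; exact: (leaf_off Usym Hc lc0 Hl). Qed.

Lemma gc : is_cycle g c.
Proof.
case/and3P: Hc => h1 h2 h3; apply/and3P; split => //.
apply: (cycle_from_next h2) => x xc.
have := next_cycle h3 xc; set y := next c x => Uxy.
have yc : y \in c by rewrite mem_next.
have nse : forall a b, same_edge x y a b -> a \in c /\ b \in c.
  by move=> a b; rewrite /same_edge => /orP[]/andP[/eqP<- /eqP<-].
rewrite gE; apply/orP; left; apply/orP; left; rewrite Uxy /=.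
apply/andP; split; apply/negP => /nse [h h'].
- by move: lc; rewrite h.
- by move: Hvwc; rewrite h h'.
Qed.

Let H1a s t : Wp s -> g s t -> t != u -> Wp t.
Proof.
move=> Ws; case/gP => [Ust _ n2|[e1 _]|[e1 _]|[e1 _]|[_ e2]] tu.
- case: (boolP (Wp t)) => // nWt; have tv := W2 Ws Ust nWt.
  have sw : s = w by apply: W3 Ws _; rewrite -tv.
  by move: n2; rewrite sw tv /same_edge !eqxx orbT.
- by move: Ws Wl; rewrite e1 => ->.
- by move: Ws Wv; rewrite e1 => ->.
- by move: Ws Wu; rewrite e1 => ->.
- by move: tu; rewrite e2 eqxx.
Qed.

Let H2a s : Wp s -> g s u -> s = w.
Proof.
move=> Ws; case/gP => [Usu _ _|[_ e2]|[e1 _]|[e1 _]|[e1 _]] //.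
- by move: uv; rewrite (W2 Ws Usu Wu) eqxx.
- by move: uv; rewrite e2 eqxx.
- by move: Ws Wv; rewrite e1 => ->.
- by move: Ws Wu; rewrite e1 => ->.
Qed.

Let H1b s t : ~~ Wp s -> g s t -> t != w -> ~~ Wp t.
Proof.
move=> nWs; case/gP => [Ust _ _|[_ e2]|[_ e2]|[_ e2]|[_ e2]] tw.
- apply/negP => Wt; rewrite Usym in Ust; have sv := W2 Wt Ust nWs.
  have := W3 Wt; rewrite -sv => /(_ Ust) e3.
  by move: tw; rewrite e3 eqxx.
- by rewrite e2.
- by rewrite e2.
- by move: tw; rewrite e2 eqxx.
- by rewrite e2.
Qed.

Let H2b s : ~~ Wp s -> g s w -> s = u.
Proof.
move=> nWs; case/gP => [Usw _ n2|[_ e2]|[_ e2]|[e1 _]|[e1 e2]] //.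
- rewrite Usym in Usw; have sv := W2 Ww Usw nWs.
  by move: n2; rewrite sv /same_edge !eqxx.
- by move: wv; rewrite e2 eqxx.
- by move: wl; rewrite e2 eqxx.
- by move: wu; rewrite e2 eqxx.
Qed.

Lemma gcyc c' : is_cycle g c' -> is_cycle U c'.
Proof.
move=> cc; case/and3P: (cc) => h1 h2 h3; apply/and3P; split => //.
apply: (cycle_from_next h2) => x xc.
have := next_cycle h3 xc => gxy.
have lc' : l \notin c' by apply/negP => lc'; exact: (leaf_off g_sym cc lc' gl).
case: (gP gxy) => [//|ex _|_ ey|ex ey|ex ey].
- by rewrite -ex xc in lc'.
- by move: lc'; rewrite -ey mem_next xc.
- exfalso; apply: (@no_cross _ g c' Wp x cc xc).
  + by rewrite ey.
  + by move=> s t Ws gst; rewrite ex; exact: (H1a Ws gst).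
  + by move=> s Ws; rewrite ey ex; exact: (H2a Ws).
- exfalso; apply: (@no_cross _ g c' (fun t => ~~ Wp t) x cc xc).
  + by rewrite ey.
  + by move=> s t Ws gst; rewrite ex; exact: (H1b Ws gst).
  + by move=> s Ws; rewrite ey ex; exact: (H2b Ws).
Qed.

Let gconn_uz x : connect (rmv U v) u x -> x = l \/ connect g u x.
Proof.
case/connectP => p pp ->; elim/last_ind: p pp => [|p y IH]; first by right; exact: connect0.
rewrite rcons_path last_rcons => /andP[pp /and3P[e1 e2 e3]].
case: (IH pp) => [hl|hc].
  by rewrite hl in e1; rewrite (Hl e1); right; exact: connect0.
move: e1 e2 e3 hc; set x0 := last u p => e1 e2 e3 hc.
case: (boolP (same_edge x0 y l u)) => [se1|nse1].
  move: se1; rewrite /same_edge => /orP[]/andP[_ /eqP->]; [right; exact: connect0|by left].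
case: (boolP (same_edge x0 y v w)) => [se2|nse2].
  by move: se2; rewrite /same_edge => /orP[]/andP[/eqP e4 /eqP e5]; [move: e2|move: e3]; rewrite ?e4 ?e5 eqxx.
right; apply: connect_trans hc (connect1 _); by rewrite gE e1 nse1 nse2.
Qed.

Let gconn_uv : connect g u v.
Proof.
case: (gconn_uz Hz) => [zl|cz].
  by move: Hzv; rewrite zl nUlv.
apply: connect_trans cz (connect1 _).
by rewrite gE Hzv /same_edge vu vl zv zw !andbF.
Qed.

Lemma gconn : connected_graph g.
Proof.
have cs := sym_connect_sym g_sym.
have glv : g l v by rewrite gE /same_edge !eqxx !orbT.
have guw : g u w by rewrite gE /same_edge !eqxx !orbT.
move=> x y; apply: (connect_sub _ (Ucon x y)) => a b Uab.
case: (boolP (g a b)) => gab; first exact: connect1.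
case: (boolP (same_edge a b l u)) => [se1|nse1].
  move: se1; rewrite /same_edge => /orP[]/andP[/eqP-> /eqP->].
  + by apply: connect_trans (connect1 glv) _; rewrite cs.
  + by apply: connect_trans gconn_uv (connect1 _); rewrite g_sym.
case: (boolP (same_edge a b v w)) => [se2|nse2].
  move: se2; rewrite /same_edge => /orP[]/andP[/eqP-> /eqP->].
  + by apply: connect_trans (connect1 guw); rewrite cs.
  + by apply: connect_trans (connect1 _) gconn_uv; rewrite g_sym.
by move: gab; rewrite gE Uab nse1 nse2.
Qed.

Lemma core : u_switch U l u v w /\ two_switch U l u v w l v.
Proof.
split; last by rewrite -/g gE /same_edge !eqxx !orbT.
split; first exact: inter.
split; [split; [exact: g_sym|exact: g_irr]|exact: gconn|].
exists c; split; first exact: gc.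
by move=> c' cc'; apply: Huniq; exact: gcyc.
Qed.

End Core.

Theorem lemma3p3 (T : finType) (U : rel T) (l u : T) :
  unicyclic U -> U l u -> deg U l = 1 -> on_cycle U u ->
  (forall v : T, on_cycle U v -> v != u -> 2 < deg U v ->
     exists a b c d : T, u_switch U a b c d /\ two_switch U a b c d l v) /\
  (forall v : T, ~ on_cycle U v -> 2 <= deg U v ->
     exists a b c d : T, u_switch U a b c d /\ two_switch U a b c d l v).
Proof.
case=> [[Usym Uirr] Ucon [c [Hc Huniq]]] Hlu dl onu.
have Hl : forall y, U l y -> y = u.
  move: dl; rewrite /deg => /eqP/cards1P[x0 Hx0] y Uly.
  have : u \in [set w | U l w] by rewrite inE.
  have : y \in [set w | U l w] by rewrite inE.
  by rewrite Hx0 !inE => /eqP-> /eqP->.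
have Huc : u \in c by case: onu => c' [cc uc]; exact: (in_c Huniq cc uc).
have oc x : on_cycle U x <-> x \in c.
  by split; [case=> c' [cc xc]; exact: (in_c Huniq cc xc) | move=> xc; exists c].
have dlv v : 2 <= deg U v -> l != v by move=> dv; apply: contraTneq dv => <-; rewrite dl.
split.
- move=> v /oc vc vu dv.
  have Hlv : l != v by apply: dlv; exact: ltnW.
  have Huv : u != v by rewrite eq_sym.
  case/and3P: (Hc) => h1 h2 h3.
  set z := next c v.
  have Uvz : U v z := next_cycle h3 vc.
  have zc : z \in c by rewrite mem_next.
  have zv : z != v by apply: contraTneq Uvz => ->; rewrite Uirr.
  have [w Uvw wc] : exists2 w, U v w & w \notin c.
    have : ~~ ([set y | U v y] \subset [set z; prev c v]).
      apply/negP => /subset_leq_card; rewrite cards2 => h; move: dv; rewrite /deg.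
      apply/negP; rewrite -leqNgt; apply: leq_trans h _; by case: (_ != _).
    case/subsetPn => y; rewrite inE => Uvy yn.
    exists y => //; apply/negP => yc; case/negP: yn; rewrite !inE.
    case: (eqVneq y z) => [->|yz] //=.
    have yv : y != v by apply: contraTneq Uvy => ->; rewrite Uirr.
    have cn : connect (rmv U v) z y := cyc_conn Usym Hc vc zc yc zv yv.
    have Uyv : U y v by rewrite Usym.
    have [c' [cc _ _ yc' nyc]] := mk_cycle Uirr cn yz Uyv Uvz.
    have : [set y; v] \in cycle_edges c.
      by rewrite -(Huniq _ cc); apply/imsetP; exists y => //; rewrite nyc.
    case/imsetP => t tc /setP E.
    move: (E v) (E y); rewrite !inE !eqxx orbT /= => /esym/orP[/eqP vt|/eqP vt] /esym/orP[/eqP yt|/eqP yt].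
    + by move: yv; rewrite yt vt eqxx.
    + by move: yz; rewrite /z yt -vt eqxx.
    + by rewrite vt yt prev_next.
    + by move: yv; rewrite yt vt eqxx.
  have Hzv : U z v by rewrite Usym.
  have Hz : connect (rmv U v) u z := cyc_conn Usym Hc vc Huc zc Huv zv.
  have Hzw : z != w by apply: contraNneq wc => <-.
  have Hvwc : ~~ (v \in c) || ~~ (w \in c) by rewrite wc orbT.
  exists l, u, v, w.
  exact: (core Usym Uirr Ucon Hc Huniq Hlu Hl Uvw Hzv Hz Hzw Hvwc Huv Hlv).
- move=> v nv dv.
  have vc : v \notin c by apply/negP => vc; apply: nv; exists c.
  have Huv : u != v by apply: contraNneq vc => <-.
  have Hlv := dlv v dv.
  case/connectP: (Ucon u v) => p pp pl.
  have vp : v \in p.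
    have := mem_last u p; rewrite -pl in_cons => /orP[/eqP e|//].
    by move: Huv; rewrite -e eqxx.
  have [z [Hz Hzv]] := path_to pp vp Huv.
  have : ~~ ([set y | U v y] \subset [set z]).
    apply/negP => /subset_leq_card; rewrite cards1 => h; move: dv; rewrite /deg.
    by apply/negP; rewrite -ltnNge ltnS.
  case/subsetPn => w; rewrite !inE => Uvw wz.
  have Hzw : z != w by rewrite eq_sym.
  have Hvwc : ~~ (v \in c) || ~~ (w \in c) by rewrite vc.
  exists l, u, v, w.
  exact: (core Usym Uirr Ucon Hc Huniq Hlu Hl Uvw Hzv Hz Hzw Hvwc Huv Hlv).
Qed.
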